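(* Consider the distributed quantized weight-balancing algorithm described in the context on a strongly connected digraph with $N$ nodes, with step-size $\gamma(k)=2^{-n}$ for $2^n-1\le k\le 2^{n+1}-2$. Let $\tilde T=3N(N-1)N^{2N}$ and let $k_0\in\mathbb{Z}_{++}$ be such that $\gamma(k)=\gamma(k_0)$ for all $k\in[k_0,k_0+\tilde T]$. Let $\tau\ge k_0$ be an integer such that $\Vert\boldsymbol{\epsilon}(\tau-1)\Vert_1<2N(N-1)\gamma(\tau-1)$ and $\Vert\boldsymbol{\epsilon}(\tau)\Vert_1\ge 2N(N-1)\gamma(\tau)$. Then there exists an integer $t\in[1,\tilde T]$ such that $\Vert\boldsymbol{\epsilon}(\tau+t)\Vert_1<2N(N-1)\gamma(\tau+t)$.
   Context: $\mathcal{G}=(\mathcal{V},\mathcal{E})$, $\mathcal{V}=\{1,\dots,N\}$, no self-loops; $\mathcal{N}_i^-=\{j:(j,i)\in\mathcal{E}\}$, $\mathcal{N}_i^+=\{j:(i,j)\in\mathcal{E}\}$, $d_i^+=|\mathcal{N}_i^+|$. Algorithm: $a_{ij}(0)=1$ if $j\in\mathcal{N}_i^-$ and $0$ otherwise; $b_i(k)=\sum_{j\in\mathcal{N}_i^-}a_{ij}(k)-\sum_{j\in\mathcal{N}_i^+}a_{ji}(k)$; $n_i(k)=1$ if $b_i(k)\ge d_i^+\gamma(k)$, else $0$; $a_{ij}(k+1)=a_{ij}(k)+n_j(k)\gamma(k)$ for $j\in\mathcal{N}_i^-$. $\boldsymbol{\epsilon}(k)=(|b_i(k)|)_{i=1}^N$.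 *)

(* Defs.v *)
From HB Require Import structures.
From mathcomp Require Import all_boot all_order all_algebra.
Set Implicit Arguments. Unset Strict Implicit. Unset Printing Implicit Defensive.
Import Order.TTheory GRing.Theory Num.Theory.
Local Open Scope ring_scope.

(* step size gamma(k) = 2^{-n} where 2^n - 1 <= k <= 2^{n+1} - 2,
   i.e. n = floor(log2 (k+1)). *)
Definition gamma {R : realFieldType} (k : nat) : R :=
  (2%:R ^- trunc_log 2 k.+1)%R.

Definition outdeg {N : nat} (E : rel 'I_N) (i : 'I_N) : nat := #|[pred j | E i j]|.

Definition imbalance {R : realFieldType} {N : nat} (E : rel 'I_N)
  (a : 'I_N -> 'I_N -> R) (i : 'I_N) : R :=
  \sum_(j | E j i) a i j - \sum_(j | E i j) a j i.

Definition nflag {R : realFieldType} {N : nat} (E : rel 'I_N)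
  (a : 'I_N -> 'I_N -> R) (k : nat) (i : 'I_N) : bool :=
  (outdeg E i)%:R * gamma k <= imbalance E a i.

Fixpoint weights {R : realFieldType} {N : nat} (E : rel 'I_N) (k : nat)
  : 'I_N -> 'I_N -> R :=
  match k with
  | 0 => fun i j => if E j i then 1 else 0
  | k'.+1 =>
      let a := weights E k' in
      fun i j => if E j i then a i j + (if nflag E a k' j then gamma k' else 0)
                 else a i j
  end.

Definition eps_norm1 {R : realFieldType} {N : nat} (E : rel 'I_N) (k : nat) : R :=
  \sum_i `|imbalance E (weights E k) i|.

Definition Ttilde (N : nat) : nat := 3 * N * (N - 1) * N ^ (2 * N).

(* Main.v *)
Require Import Defs.
From HB Require Import structures.
From mathcomp Require Import all_boot all_order all_algebra.
From mathcomp Require Import zify ring lra.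
Import Order.TTheory GRing.Theory Num.Theory.
Local Open Scope ring_scope.


Definition tl (k : nat) : nat := trunc_log 2 k.+1.

Lemma gammaE (R : realFieldType) k : gamma k = (2%:R ^+ tl k)^-1 :> R.
Proof. by []. Qed.

Lemma gamma_gt0 (R : realFieldType) k : 0 < gamma k :> R.
Proof. by rewrite gammaE invr_gt0 exprn_gt0 // ltr0n. Qed.

Lemma tl_mono m n : (m <= n)%N -> (tl m <= tl n)%N.
Proof. by move=> h; apply: leq_trunc_log. Qed.

Lemma tlS k : (tl k.+1 <= (tl k).+1)%N.
Proof.
have h1 : (2 ^ tl k.+1 <= k.+2)%N by apply: trunc_logP.
have h2 : (k.+1 < 2 ^ (tl k).+1)%N by apply: trunc_log_ltn.
have : (2 ^ tl k.+1 < 2 ^ (tl k).+2)%N.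
  rewrite expnS; apply: (leq_ltn_trans h1); lia.
by rewrite ltn_exp2l.
Qed.

Lemma gamma_le (R : realFieldType) m n : (tl m <= tl n)%N -> gamma n <= gamma m :> R.
Proof.
move=> h; rewrite !gammaE lef_pV2 ?posrE ?exprn_gt0 ?ltr0n //.
by rewrite ler_eXn2l // ltr1n.
Qed.

Lemma gamma_tl_eq (R : realFieldType) m n : gamma m = gamma n :> R -> tl m = tl n.
Proof.
move=> h; apply/eqP; rewrite eqn_leq; apply/andP; split; rewrite leqNgt; apply/negP => lt.
- have : gamma m < gamma n :> R.
    by rewrite !gammaE ltf_pV2 ?posrE ?exprn_gt0 ?ltr0n // ltr_eXn2l // ltr1n.
  by rewrite h ltxx.
- have : gamma n < gamma m :> R.
    by rewrite !gammaE ltf_pV2 ?posrE ?exprn_gt0 ?ltr0n // ltr_eXn2l // ltr1n.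
  by rewrite h ltxx.
Qed.

Lemma gamma_S2 (R : realFieldType) k : gamma k <= 2 * gamma k.+1 :> R.
Proof.
rewrite !gammaE.
have := tlS k; rewrite leq_eqVlt ltnS => /orP [/eqP e | h].
  by rewrite e exprS invfM mulrA mulfV ?mul1r ?pnatr_eq0.
have e : tl k.+1 = tl k by apply/eqP; rewrite eqn_leq h tl_mono.
rewrite e; have : 0 < (2%:R ^+ tl k)^-1 :> R by rewrite invr_gt0 exprn_gt0 // ltr0n.
lra.
Qed.

Lemma gamma_mult (R : realFieldType) k : gamma k = 2 ^+ (tl k.+1 - tl k) * gamma k.+1 :> R.
Proof.
rewrite !gammaE.
have h := @tl_mono _ _ (leqnSn k).
rewrite -{2}(subnK h) exprD invfM mulrA divff ?mul1r //.
by rewrite expf_neq0 // pnatr_eq0.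
Qed.

Lemma gamma0 (R : realFieldType) : gamma 0 = 1 :> R.
Proof. by rewrite gammaE /tl trunc_log1 expr0 invr1. Qed.

Lemma window k0 T tau : tl (k0 + T) = tl k0 -> (k0 <= tau)%N -> (0 < tau)%N ->
  (tl tau.-1 < tl tau)%N -> forall s, (tau <= s <= tau + T)%N -> tl s = tl tau.
Proof.
move=> hT hk ht hlt s /andP [h1 h2].
have a1 : (2 ^ tl k0 <= k0.+1)%N by apply: trunc_logP.
have a2 : ((k0 + T).+1 < 2 ^ (tl k0).+1)%N by rewrite -{1}hT; apply: trunc_log_ltn.
have a3 : (2 ^ tl k0 <= 2 ^ tl tau)%N by rewrite leq_exp2l // tl_mono.
have a4 : (2 ^ tl tau <= tau.+1)%N by apply: trunc_logP.
have a5 : (tau < 2 ^ tl tau)%N.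
  rewrite ltnNge; apply/negP => c.
  have := @trunc_log_max 2 tau (tl tau) erefl c.
  move: hlt; rewrite /tl prednK // ltnNge; move/negP; apply.
apply: trunc_log_eq => //.
rewrite !expnS in a2 *.
apply/andP; split.
  apply: (leq_trans a4); lia.
lia.
Qed.


Definition bb (R : realFieldType) {N : nat} (E : rel 'I_N) (s : nat) (i : 'I_N) : R :=
  imbalance E (weights E s) i.
Definition fire (R : realFieldType) {N : nat} (E : rel 'I_N) (s : nat) (i : 'I_N) : bool :=
  nflag (R:=R) E (weights E s) s i.
Definition cnt (R : realFieldType) {N : nat} (E : rel 'I_N) (s : nat) (i : 'I_N) : nat :=
  (\sum_(j | E j i) (fire R E s j : nat))%N.

Lemma sum_if_const (R : realFieldType) (N : nat) (P Q : pred 'I_N) (x : R) :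
  \sum_(j | P j) (if Q j then x else 0) = (\sum_(j | P j) (Q j : nat))%N%:R * x.
Proof.
rewrite natr_sum mulr_suml; apply: eq_bigr => j _; case: (Q j) => /=.
  by rewrite mul1r. by rewrite mul0r.
Qed.

Lemma bb_upd (R : realFieldType) (N : nat) (E : rel 'I_N) s i :
  bb R E s.+1 i = bb R E s i + (cnt R E s i)%:R * gamma s
     - (fire R E s i : nat)%:R * ((outdeg E i)%:R * gamma s).
Proof.
rewrite /bb /imbalance /=.
rewrite (eq_bigr (fun j => weights E s i j + (if fire R E s j then gamma s else 0))); last first.
  by move=> j ->.
rewrite [X in _ - X](eq_bigr (fun j => weights E s j i + (if fire R E s i then gamma s else 0))); last first.
  by move=> j ->.
rewrite !big_split /= sum_if_const sum_if_const /cnt.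
have -> : (\sum_(j | E i j) (fire R E s i : nat))%N = ((fire R E s i : nat) * outdeg E i)%N.
  by rewrite sum_nat_const mulnC.
rewrite natrM; ring.
Qed.

Definition negp {R : realFieldType} (x : R) : R := if x < 0 then - x else 0.
Definition MM (R : realFieldType) {N : nat} (E : rel 'I_N) (s : nat) : R :=
  \sum_i negp (bb R E s i).

Lemma negp_ge0 (R : realFieldType) (x : R) : 0 <= negp x.
Proof. rewrite /negp; case: ifP => h //; lra. Qed.

Lemma norm_negp (R : realFieldType) (x : R) : `|x| = x + 2 * negp x.
Proof.
rewrite /negp; case: ifP => h.
  rewrite ltr0_norm //; ring.
by rewrite ger0_norm ?mulr0 ?addr0 // leNgt h.
Qed.

Lemma sum_bb0 (R : realFieldType) (N : nat) (E : rel 'I_N) s :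
  \sum_i bb R E s i = 0.
Proof.
rewrite /bb /imbalance sumrB (exchange_big_dep xpredT) //=.
by rewrite subrr.
Qed.

Lemma eps_MM (R : realFieldType) (N : nat) (E : rel 'I_N) s :
  eps_norm1 (R:=R) E s = 2 * MM R E s.
Proof.
rewrite /eps_norm1 /MM (eq_bigr (fun i => bb R E s i + 2 * negp (bb R E s i))).
  by rewrite big_split /= sum_bb0 add0r mulr_sumr.
by move=> i _; rewrite norm_negp.
Qed.

Lemma fire_neg (R : realFieldType) (N : nat) (E : rel 'I_N) s i :
  bb R E s i < 0 -> fire R E s i = false.
Proof.
move=> h; rewrite /fire /nflag; apply/negbTE; rewrite -ltNge.
apply: (lt_le_trans h); apply: mulr_ge0 => //; exact: ltW (gamma_gt0 _ _).
Qed.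

Lemma negp_mono (R : realFieldType) (N : nat) (E : rel 'I_N) s i :
  negp (bb R E s.+1 i) <= negp (bb R E s i).
Proof.
have g0 := gamma_gt0 R s.
have c0 : 0 <= (cnt R E s i)%:R * gamma s :> R by apply: mulr_ge0 => //; exact: ltW.
rewrite bb_upd /negp.
case: (ltP (bb R E s i) 0) => h.
  rewrite fire_neg //= mul0r subr0.
  case: ifP => _; lra.
case: ifP => // h2; exfalso; move: h2.
case f: (fire R E s i) => /=.
  move: f; rewrite /fire /nflag => f; rewrite mul1r.
  have f2 : (outdeg E i)%:R * gamma s <= bb R E s i by rewrite f.
  lra.
rewrite mul0r subr0; lra.
Qed.

Lemma negp_strict (R : realFieldType) (N : nat) (E : rel 'I_N) s i :
  bb R E s i < 0 -> (0 < cnt R E s i)%N ->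
  negp (bb R E s.+1 i) < negp (bb R E s i).
Proof.
move=> h hc.
have g0 := gamma_gt0 R s.
have c0 : 0 < (cnt R E s i)%:R * gamma s :> R by apply: mulr_gt0 => //; rewrite ltr0n.
rewrite bb_upd /negp fire_neg //= mul0r subr0 h.
case: ifP => _; lra.
Qed.

Lemma MM_mono (R : realFieldType) (N : nat) (E : rel 'I_N) s :
  MM R E s.+1 <= MM R E s.
Proof. by apply: ler_sum => i _; apply: negp_mono. Qed.

Lemma MM_mono_le (R : realFieldType) (N : nat) (E : rel 'I_N) s s' :
  (s <= s')%N -> MM R E s' <= MM R E s.
Proof.
move/subnK => <-; elim: (s' - s)%N => [|n IH] //=.
rewrite addSn; exact: le_trans (MM_mono _ _ _ _) IH.
Qed.

Definition mult {R : realFieldType} (g x : R) := exists z : int, x = z%:~R * g.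

Lemma weights_mult (R : realFieldType) (N : nat) (E : rel 'I_N) s i j :
  mult (gamma s) (weights (R:=R) E s i j).
Proof.
elim: s i j => [|s IH] i j /=.
  rewrite gamma0; case: (E j i); [by exists 1; rewrite mulr1 | by exists 0; rewrite mul0r].
have [z hz] := IH i j.
have e : weights (R:=R) E s i j = (z * 2 ^+ (tl s.+1 - tl s))%:~R * gamma s.+1.
  rewrite hz (gamma_mult R s) mulrA intrM rmorphXn /=. done.
case: (E j i); last by exists (z * 2 ^+ (tl s.+1 - tl s)).
case: (nflag _ _ _ _).
  exists (z * 2 ^+ (tl s.+1 - tl s) + 2 ^+ (tl s.+1 - tl s)).
  rewrite e [gamma s](gamma_mult R s) intrD mulrDl rmorphXn /=; done.
by exists (z * 2 ^+ (tl s.+1 - tl s)); rewrite e addr0.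
Qed.


Lemma outdeg_le (N : nat) (E : rel 'I_N) (E_irr : irreflexive E) i :
  (outdeg E i <= N.-1)%N.
Proof.
rewrite /outdeg -[X in (_ <= X.-1)%N]card_ord -(cardC1 i).
apply: subset_leq_card; apply/subsetP => j; rewrite !inE => h.
by apply/eqP => e; move: h; rewrite e E_irr.
Qed.

Lemma outdeg_ge1 (N : nat) (E : rel 'I_N) (E_sc : forall i j : 'I_N, connect E i j)
  (hN : (2 <= N)%N) i : (0 < outdeg E i)%N.
Proof.
have [j hj] : exists j : 'I_N, j != i.
  case: (eqVneq i (Ordinal (ltn_trans (ltnSn 0) hN))) => [e|n]; last by exists (Ordinal (ltn_trans (ltnSn 0) hN)); rewrite eq_sym.
  exists (Ordinal hN); rewrite e; apply/eqP => /(congr1 val) //.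
have /connectP [p hp el] := E_sc i j.
case: p hp el => [|x p] /=.
  by move=> _ e; move: hj; rewrite e eqxx.
move=> /andP [hx _] _; apply/card_gt0P; exists x; by rewrite inE.
Qed.

Lemma boundary (N : nat) (E : rel 'I_N) (E_sc : forall i j : 'I_N, connect E i j)
  (Z : {set 'I_N}) v w : v \notin Z -> w \in Z ->
  exists a b, [/\ a \notin Z, b \in Z & E a b].
Proof.
move=> hv hw; have /connectP [p hp el] := E_sc v w.
elim: p v hv hp el => [|x p IH] v hv /=.
  by move=> _ e; move: hv; rewrite -e hw.
move=> /andP [hx hp] el.
case: (boolP (x \in Z)) => hxZ.
  by exists v, x.
exact: IH hxZ hp el.
Qed.


Lemma mult_sum (R : realFieldType) (N : nat) (g : R) (P : pred 'I_N) (F : 'I_N -> R) :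
  (forall j, mult g (F j)) -> mult g (\sum_(j | P j) F j).
Proof.
move=> h; apply: (big_ind (mult g)).
- by exists 0; rewrite mul0r.
- by move=> x y [a ->] [b ->]; exists (a + b); rewrite intrD mulrDl.
- by move=> j _; apply: h.
Qed.

Lemma bb_mult (R : realFieldType) (N : nat) (E : rel 'I_N) s i :
  mult (gamma s) (bb R E s i).
Proof.
rewrite /bb /imbalance.
have [a ha] := @mult_sum R N (gamma s) (fun j => E j i) _ (weights_mult R N E s i).
have [b hb] := @mult_sum R N (gamma s) (fun j => E i j) _ (fun j => weights_mult R N E s j i).
by exists (a - b); rewrite ha hb intrB mulrBl.
Qed.

Lemma negp_mult (R : realFieldType) (g x : R) : 0 < g -> mult g x ->
  exists n : nat, negp x = n%:R * g.
Proof.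
move=> g0 [[n|n] ->].
  exists 0%N; rewrite /negp; case: ifP => h; last by rewrite mul0r.
  exfalso.
  have : 0 <= (Posz n)%:~R * g by apply: mulr_ge0; [rewrite ler0z | exact: ltW].
  lra.
exists n.+1; rewrite NegzE /negp mulrNz.
have -> : ((n.+1)%:Z)%:~R = (n.+1)%:R :> R by [].
have h : 0 < (n.+1)%:R * g :> R by apply: mulr_gt0 => //; rewrite ltr0n.
rewrite mulNr oppr_lt0 h opprK //.
Qed.

Lemma MM_mult (R : realFieldType) (N : nat) (E : rel 'I_N) s :
  exists m : nat, MM R E s = m%:R * gamma s.
Proof.
rewrite /MM; apply: (big_ind (fun x : R => exists m : nat, x = m%:R * gamma s)).
- by exists 0%N; rewrite mul0r.
- by move=> x y [a ->] [b ->]; exists (a + b)%N; rewrite natrD mulrDl.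
- move=> i _; exact: negp_mult (gamma_gt0 R s) (bb_mult R N E s i).
Qed.

Lemma bb_le_MM (R : realFieldType) (N : nat) (E : rel 'I_N) s i :
  bb R E s i <= MM R E s.
Proof.
have h0 := sum_bb0 R N E s.
rewrite (bigD1 i) //= in h0.
rewrite /MM (bigD1 i) //=.
have e : bb R E s i = \sum_(j | j != i) - bb R E s j by rewrite sumrN; lra.
have : 0 <= negp (bb R E s i) by apply: negp_ge0.
have : \sum_(j | j != i) - bb R E s j <= \sum_(j | j != i) negp (bb R E s j).
  apply: ler_sum => j _; rewrite /negp; case: ifP => h; first lra.
  by rewrite oppr_le0 leNgt h.
lra.
Qed.

Lemma some_fire (R : realFieldType) (N : nat) (E : rel 'I_N)
  (E_irr : irreflexive E) (E_sc : forall i j : 'I_N, connect E i j)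
  (hN : (2 <= N)%N) s :
  N%:R * (N%:R - 1) * gamma s <= MM R E s -> exists i, fire R E s i.
Proof.
move=> h; case: (boolP [exists i, fire R E s i]) => [/existsP // | hn]; exfalso.
move/existsPn: hn => hn.
have g0 := gamma_gt0 R s.
have hlt : MM R E s < \sum_(i : 'I_N) (outdeg E i)%:R * gamma s.
  have -> : MM R E s = \sum_i (negp (bb R E s i) + bb R E s i).
    by rewrite big_split /= sum_bb0 addr0.
  apply: ltr_sum.
    by apply/hasP; exists (Ordinal (ltn_trans (ltnSn 0) hN)); rewrite ?mem_index_enum.
  move=> i _; have := hn i; rewrite /fire /nflag -ltNge => hb.
  have hb' : bb R E s i < (outdeg E i)%:R * gamma s := hb.
  have : 0 < (outdeg E i)%:R * gamma s :> R.
    by apply: mulr_gt0; [rewrite ltr0n; exact: outdeg_ge1 | exact: g0].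
  rewrite /negp; case: ifP => hh.
    by rewrite addNr.
  by rewrite add0r.
have : \sum_(i : 'I_N) (outdeg E i)%:R * gamma s <= \sum_(i : 'I_N) (N%:R - 1) * gamma s :> R.
  apply: ler_sum => i _; apply: ler_wpM2r; first exact: ltW.
  have := @outdeg_le N E E_irr i; rewrite -(ler_nat R) => hh; apply: (le_trans hh).
  by rewrite -subn1 natrB ?(ltnW hN).
rewrite sumr_const card_ord => hh.
have : ((N%:R - 1) * gamma s *+ N) = N%:R * (N%:R - 1) * gamma s :> R by rewrite -mulr_natl mulrA.
lra.
Qed.


Lemma nat_bound N : (2 <= N)%N -> (2 * N * (N - 1) * N ^ N <= 3 * N ^ (2 * N))%N.
Proof.
move=> hN.
have h1 : (N * (N - 1) <= N ^ 2)%N by rewrite expnS expn1 leq_mul2l leq_subr orbT.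
have h2 : (N ^ 2 * N ^ N <= N ^ (2 * N))%N.
  rewrite -expnD leq_pexp2l //; [lia | lia].
have h3 : (N * (N - 1) * N ^ N <= N ^ (2 * N))%N.
  apply: leq_trans h2; rewrite leq_mul2r h1 orbT //.
have := leq_mul (leqnSn 2) h3; rewrite !mulnA //.
Qed.

Lemma core (R : realFieldType) (N : nat) (E : rel 'I_N)
  (E_irr : irreflexive E) (E_sc : forall i j : 'I_N, connect E i j)
  (hN : (2 <= N)%N) (k L : nat) (g : R)
  (hg : forall u, (k <= u < k + L)%N -> gamma u = g)
  (hM : MM R E (k + L)%N = MM R E k)
  (hlow : N%:R * (N%:R - 1) * g <= MM R E k)
  (hup : MM R E k < 2 * N%:R * (N%:R - 1) * g)
  (hL : L = (3 * N ^ (2 * N))%N) : False.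
Proof.
have L0 : (0 < L)%N by rewrite hL muln_gt0 expn_gt0; lia.
have g0 : 0 < g by rewrite -(hg k) ?gamma_gt0 //; lia.
have hMs : forall u, (k <= u <= k + L)%N -> MM R E u = MM R E k.
  move=> u /andP [h1 h2]; apply/eqP; rewrite eq_le; apply/andP; split.
    exact: MM_mono_le.
  rewrite -hM; exact: MM_mono_le.
have hstep : forall u, (k <= u < k + L)%N -> forall i,
    negp (bb R E u.+1 i) = negp (bb R E u i).
  move=> u hu i.
  have e : MM R E u.+1 = MM R E u by rewrite !hMs //; lia.
  have hs : \sum_j (negp (bb R E u j) - negp (bb R E u.+1 j)) = 0.
    by rewrite sumrB -/(MM R E u) -/(MM R E u.+1) e subrr.
  have hnn : forall j, xpredT j -> 0 <= negp (bb R E u j) - negp (bb R E u.+1 j).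
    by move=> j _; rewrite subr_ge0 negp_mono.
  have := @psumr_eq0P _ _ _ _ hnn hs i isT.
  lra.
have hconst : forall n, (n <= L)%N -> forall i,
    negp (bb R E (k + n)%N i) = negp (bb R E k i).
  elim=> [|n IH] hn i; first by rewrite addn0.
  rewrite addnS hstep; last lia.
  by apply: IH; lia.
have hS : forall n i, (n <= L)%N -> bb R E k i < 0 -> bb R E (k + n)%N i = bb R E k i.
  move=> n i hn hi; have := hconst n hn i; rewrite /negp hi.
  case: ifP => h; lra.
have hnS : forall n i, (n <= L)%N -> ~~ (bb R E k i < 0) -> 0 <= bb R E (k + n)%N i.
  move=> n i hn hi; have := hconst n hn i; rewrite /negp (negbTE hi).
  case: ifP => h; [lra | by rewrite leNgt h].
have hcnt : forall n i, (n < L)%N -> bb R E k i < 0 -> forall j, E j i ->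
    fire R E (k + n)%N j = false.
  move=> n i hn hi.
  have c0 : cnt R E (k + n)%N i = 0%N.
    apply/eqP; rewrite -leqn0 leqNgt; apply/negP => hc.
    have hb : bb R E (k + n)%N i < 0 by rewrite (hS n i) //; exact: ltnW.
    have := negp_strict R N E (k + n)%N i hb hc.
    rewrite -addnS !hconst ?ltxx //; lia.
  move: c0 => /eqP; rewrite /cnt sum_nat_eq0 => /forallP h j hj.
  by have := h j; rewrite hj /= => /eqP; case: (fire R E (k + n)%N j).
pose f i n := (\sum_(k <= u < k + n) (fire R E u i : nat))%N.
have fS : forall i n, f i n.+1 = (f i n + fire R E (k + n)%N i)%N.
  by move=> i n; rewrite /f addnS big_nat_recr //=; lia.
have hf : forall n i, (n <= L)%N -> bb R E (k + n)%N i = bb R E k i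
    + (\sum_(j | E j i) f j n)%N%:R * g - (f i n)%:R * ((outdeg E i)%:R * g).
  elim=> [|n IH] i hn.
    rewrite addn0 /f.
    rewrite (eq_bigr (fun _ => 0%N)); last by move=> j _; rewrite addn0 big_geq.
    by rewrite big1 // addn0 big_geq // !mul0r subr0 addr0.
  rewrite addnS bb_upd (hg (k + n)%N); last lia.
  rewrite IH; last lia.
  have fSs : (\sum_(j | E j i) f j n.+1 = \sum_(j | E j i) f j n + cnt R E (k + n)%N i)%N.
    by rewrite /cnt -big_split; apply: eq_bigr => j _; exact: fS.
  rewrite fS fSs !natrD; ring.
have fS0 : forall i, bb R E k i < 0 -> f i L = 0%N.
  move=> i hi; rewrite /f big_nat_cond big1 // => u /andP [/andP [h1 h2] _].
  rewrite -(subnKC h1) fire_neg // hS //; lia.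
have fE0 : forall v w, E v w -> bb R E k w < 0 -> f v L = 0%N.
  move=> v w hvw hw; rewrite /f big_nat_cond big1 // => u /andP [/andP [h1 h2] _].
  rewrite -(subnKC h1) (hcnt _ w) //; lia.
have fE : forall v w, E v w -> ~~ (bb R E k w < 0) ->
    (f v L)%:R * g <= MM R E k + (N%:R - 1) * ((f w L)%:R * g).
  move=> v w hvw hw.
  have e := hf L w (leqnn L).
  have b1 : bb R E (k + L)%N w <= MM R E k by rewrite -hM; apply: bb_le_MM.
  have b2 : 0 <= bb R E k w by rewrite leNgt.
  have b3 : (f v L <= \sum_(j | E j w) f j L)%N by rewrite (bigD1 v) //= leq_addr.
  have b3' : (f v L)%:R * g <= (\sum_(j | E j w) f j L)%N%:R * g.
    by rewrite ler_wpM2r ?ler_nat // ltW.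
  have dle : (outdeg E w)%:R <= N%:R - 1 :> R.
    have := @outdeg_le N E E_irr w; rewrite -(ler_nat R) => hh; apply: (le_trans hh).
    by rewrite -subn1 natrB ?(ltnW hN).
  have b4 : (f w L)%:R * ((outdeg E w)%:R * g) <= (f w L)%:R * ((N%:R - 1) * g).
    by rewrite ler_wpM2l // ler_wpM2r // ltW.
  lra.
set M := MM R E k.
have M0 : 0 < M.
  apply: lt_le_trans hlow; apply: mulr_gt0 => //; apply: mulr_gt0.
    by rewrite ltr0n; lia.
  rewrite subr_gt0 ltr1n; lia.
have [i0 hi0] : exists i0, bb R E k i0 < 0.
  case: (pickP (fun i => bb R E k i < 0)) => [i hi|hn]; first by exists i.
  exfalso; suff : M = 0 by lra.
  rewrite /M /MM big1 // => i _; rewrite /negp hn //.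
have N1 : (1 : R) <= N%:R by rewrite ler1n; lia.
pose Z t := [set u | (f u L)%:R * g <= M * N%:R ^+ t].
have Zi0 : forall t, i0 \in Z t.
  move=> t; rewrite inE fS0 // mul0r; apply: mulr_ge0; [exact: ltW | exact: exprn_ge0 (le_trans ler01 N1)].
have hsub : forall t, Z t \subset Z t.+1.
  move=> t; apply/subsetP => u; rewrite !inE => h; apply: (le_trans h).
  rewrite exprS; apply: ler_wpM2l; first exact: ltW.
  by rewrite ler_peMl // exprn_ge0 // (le_trans ler01 N1).
have hedge : forall t v w, E v w -> w \in Z t -> v \in Z t.+1.
  move=> t v w hvw; rewrite !inE => hw.
  have X1 : 1 <= N%:R ^+ t :> R by rewrite exprn_ege1.
  case: (boolP (bb R E k w < 0)) => hk.
    rewrite (fE0 v w) // mul0r; apply: mulr_ge0; [exact: ltW | exact: exprn_ge0 (le_trans ler01 N1)].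
  have := fE v w hvw hk.
  have h1 : (N%:R - 1) * ((f w L)%:R * g) <= (N%:R - 1) * (M * N%:R ^+ t).
    by apply: ler_wpM2l => //; lra.
  have h2 : M <= M * N%:R ^+ t by rewrite ler_peMr // ltW.
  rewrite exprS.
  have e : M * (N%:R * N%:R ^+ t) = N%:R * (M * N%:R ^+ t) by ring.
  rewrite e -/M; lra.
have hcard : forall t, (minn t.+1 N <= #|Z t|)%N.
  elim=> [|t IH].
    have : (0 < #|Z 0|)%N by apply/card_gt0P; exists i0.
    lia.
  case: (pickP (fun v => v \notin Z t)) => [v hv|hn].
    have [a [b [ha hb hab]]] := @boundary N E E_sc (Z t) v i0 hv (Zi0 t).
    have : Z t \proper Z t.+1.
      apply/properP; split; first exact: hsub.
      by exists a => //; apply: (hedge t a b).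
    move/proper_card; lia.
  have eT : Z t = setT by apply/setP => u; rewrite [RHS]inE; have := hn u; by case: (u \in Z t).
  have eT1 : Z t.+1 = setT.
    apply/setP => u; rewrite [RHS]inE; apply: (subsetP (hsub t) u); rewrite eT inE //.
  rewrite eT1 cardsT card_ord; lia.
have hall : forall u, (f u L)%:R * g <= M * N%:R ^+ N.-1.
  move=> u; have := hcard N.-1; rewrite prednK ?minnn; last lia.
  move=> hc; case: (boolP (u \in Z N.-1)); first by rewrite inE.
  move=> hu; exfalso.
  have : (0 < #|~: Z N.-1|)%N by apply/card_gt0P; exists u; rewrite inE.
  have := cardsC (Z N.-1); rewrite card_ord; lia.
have hsumL : (L <= \sum_i f i L)%N.
  rewrite /f exchange_big /=.
  have eL : (\sum_(k <= u < k + L) 1 = L)%N by rewrite sum_nat_const_nat muln1; lia.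
  rewrite -{1}eL big_nat_cond [X in (_ <= X)%N]big_nat_cond.
  apply: leq_sum => u /andP [/andP [h1 h2] _].
  have [i hi] := some_fire R N E E_irr E_sc hN u
    (eq_ind_r (fun x => _ <= x) (eq_ind_r (fun y => _ * y <= _) hlow (hg u (introT andP (conj h1 h2)))) (hMs u (introT andP (conj h1 (ltnW h2))))).
  by rewrite (bigD1 i) //= hi.
have hsumU : (\sum_i f i L)%N%:R * g <= N%:R * (M * N%:R ^+ N.-1).
  rewrite natr_sum mulr_suml.
  have : \sum_i ((f i L)%:R * g) <= \sum_(i : 'I_N) (M * N%:R ^+ N.-1).
    by apply: ler_sum => i _; exact: hall.
  by rewrite sumr_const card_ord mulr_natl.
have eP : (N ^ N = N * N ^ N.-1)%N by rewrite -expnS prednK //; lia.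
have hb : (2 * N * (N - 1) * (N * N ^ N.-1))%N%:R <= L%:R :> R.
  by rewrite ler_nat hL -eP nat_bound.
rewrite !natrM natrB ?natrX in hb; last lia.
have P0 : 0 < N%:R * N%:R ^+ N.-1 :> R.
  by apply: mulr_gt0; [rewrite ltr0n; lia | apply: exprn_gt0; rewrite ltr0n; lia].
have h1 : M * (N%:R * N%:R ^+ N.-1) < 2 * N%:R * (N%:R - 1) * g * (N%:R * N%:R ^+ N.-1).
  by rewrite ltr_pM2r.
have h2 : 2 * N%:R * (N%:R - 1%:R) * (N%:R * N%:R ^+ N.-1) * g <= L%:R * g.
  by rewrite ler_wpM2r // ltW.
have h3 : L%:R * g <= (\sum_i f i L)%N%:R * g by rewrite ler_wpM2r ?ler_nat // ltW.
have e1 : N%:R * (M * N%:R ^+ N.-1) = M * (N%:R * N%:R ^+ N.-1) by ring.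
have e2 : 2 * N%:R * (N%:R - 1) * g * (N%:R * N%:R ^+ N.-1) =
          2 * N%:R * (N%:R - 1%:R) * (N%:R * N%:R ^+ N.-1) * g by ring.
lra.
Qed.





Lemma fin_arith (R : realFieldType) (X Y P : R) :
  X <= Y - P -> P <= X -> Y < 2 * P -> False.
Proof. lra. Qed.

Theorem lemma7 (R : realFieldType) (N : nat) (E : rel 'I_N)
  (E_irr : irreflexive E)
  (E_sc : forall i j : 'I_N, connect E i j)
  (k0 : nat) (k0_pos : (0 < k0)%N)
  (k0_const : forall k : nat, (k0 <= k <= k0 + Ttilde N)%N ->
                 gamma k = gamma k0 :> R)
  (tau : nat) (tau_ge : (k0 <= tau)%N)
  (h_before : eps_norm1 (R:=R) E (tau - 1)
                < 2 * N%:R * (N%:R - 1) * gamma (tau - 1))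
  (h_at : 2 * N%:R * (N%:R - 1) * gamma tau <= eps_norm1 (R:=R) E tau) :
  exists t : nat, (1 <= t <= Ttilde N)%N /\
    eps_norm1 (R:=R) E (tau + t) < 2 * N%:R * (N%:R - 1) * gamma (tau + t).
Proof.
have eps0 : forall s, 0 <= eps_norm1 (R:=R) E s.
  by move=> s; rewrite /eps_norm1 sumr_ge0.
have hN : (2 <= N)%N.
  case: (leqP 2 N) => // hN; exfalso.
  have e0 : 2 * N%:R * (N%:R - 1) * gamma (tau - 1) = 0 :> R.
    have : N = 0%N \/ N = 1%N by lia.
    by case=> ->; ring.
  have := eps0 (tau - 1)%N; lra.
have tau1 : (0 < tau)%N by lia.
have etau : tau = (tau - 1).+1 by lia.
have NN0 : 0 < N%:R * (N%:R - 1) :> R.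
  apply: mulr_gt0; first by rewrite ltr0n; lia.
  by rewrite subr_gt0 ltr1n.
have emono : eps_norm1 (R:=R) E tau <= eps_norm1 (R:=R) E (tau - 1).
  rewrite !eps_MM {1}etau; apply: ler_wpM2l => //; exact: MM_mono.
have glt : gamma tau < gamma (tau - 1) :> R.
  rewrite ltNge; apply/negP => h.
  have : 2 * N%:R * (N%:R - 1) * gamma (tau - 1) <= 2 * N%:R * (N%:R - 1) * gamma tau :> R.
    by apply: ler_wpM2l => //; rewrite -mulrA; apply: mulr_ge0 => //; exact: ltW.
  lra.
have tllt : (tl (tau - 1) < tl tau)%N.
  rewrite ltnNge; apply/negP => h; have := @gamma_le R _ _ h; rewrite leNgt glt //.
have tlk0 : tl (k0 + Ttilde N) = tl k0.
  apply: (@gamma_tl_eq R); apply: k0_const; lia.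
have win : forall s, (tau <= s <= tau + Ttilde N)%N -> gamma s = gamma tau :> R.
  move=> s hs; rewrite !gammaE (@window k0 (Ttilde N) tau tlk0 tau_ge tau1 _ s hs) //.
  by rewrite -subn1.
set g : R := gamma tau.
have g0 : 0 < g by apply: gamma_gt0.
have g2 : gamma (tau - 1) <= 2 * g.
  by rewrite /g [in X in _ <= _ * gamma X]etau gamma_S2.
have Mtau : MM R E tau < 2 * N%:R * (N%:R - 1) * g.
  have : N%:R * (N%:R - 1) * gamma (tau - 1) <= N%:R * (N%:R - 1) * (2 * g).
    by rewrite ler_wpM2l // ltW.
  move: emono h_before; rewrite !eps_MM; lra.
have [L hL] : exists L, L = (3 * N ^ (2 * N))%N by eexists.
have eT : Ttilde N = (N * (N - 1) * L)%N by rewrite /Ttilde hL; ring.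
case: (boolP [exists t : 'I_(Ttilde N).+1, (0 < t)%N &&
   (eps_norm1 (R:=R) E (tau + t)%N < 2 * N%:R * (N%:R - 1) * gamma (tau + t)%N)]).
  move=> /existsP [t /andP [t1 t2]]; exists t; split => //.
  by rewrite t1 -ltnS ltn_ord.
move=> /existsPn H.
have Hlow : forall t, (1 <= t <= Ttilde N)%N -> N%:R * (N%:R - 1) * g <= MM R E (tau + t)%N.
  move=> t /andP [t1 t2].
  have := H (@Ordinal (Ttilde N).+1 t t2).
  rewrite /= t1 /= -leNgt eps_MM win; last lia.
  rewrite -/g; lra.
have T1 : (1 <= Ttilde N)%N by rewrite eT hL !muln_gt0 expn_gt0; lia.
have NN : (N * (N - 1))%N%:R = N%:R * (N%:R - 1) :> R.
  by rewrite natrM natrB //; lia.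
have Hind : forall j, (j <= N * (N - 1))%N ->
    MM R E (tau + j * L)%N <= MM R E tau - j%:R * g.
  elim=> [|j IH] hj.
    by rewrite mul0n addn0 mul0r subr0.
  have IH' := IH (ltnW hj).
  set k := (tau + j * L)%N.
  have ekL : (tau + j.+1 * L = k + L)%N by rewrite /k mulSn; ring.
  have tk : (tau <= k)%N by rewrite /k leq_addr.
  have hjL : (j.+1 * L <= Ttilde N)%N by rewrite eT leq_mul2r hj orbT.
  have kT : (k + L <= tau + Ttilde N)%N by rewrite -ekL leq_add2l.
  rewrite ekL.
  have hMle : MM R E (k + L)%N <= MM R E k by apply: MM_mono_le; rewrite leq_addr.
  have hlow : N%:R * (N%:R - 1) * g <= MM R E k.
    case: (posnP j) => [j0|jp].
      have : k = tau by rewrite /k j0 mul0n addn0.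
      move=> ->; move: h_at; rewrite eps_MM -/g; lra.
    apply: Hlow; apply/andP; split.
      by rewrite muln_gt0 jp hL muln_gt0 expn_gt0 (ltnW hN).
    apply: leq_trans hjL; rewrite leq_mul2r leqnSn orbT //.
  have hup : MM R E k < 2 * N%:R * (N%:R - 1) * g.
    apply: le_lt_trans Mtau; exact: MM_mono_le.
  have hwin : forall u, (k <= u < k + L)%N -> gamma u = g.
    move=> u /andP [h1 h2]; apply: win; rewrite (leq_trans tk h1) /=.
    exact: leq_trans (ltnW h2) kT.
  have hneq : MM R E (k + L)%N != MM R E k.
    apply/eqP => e.
    exact: (@core R N E E_irr E_sc hN k L g hwin e hlow hup hL).
  have hlt : MM R E (k + L)%N < MM R E k by rewrite lt_neqAle hneq hMle.
  have [m1 hm1] := MM_mult R N E (k + L)%N.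
  have [m2 hm2] := MM_mult R N E k.
  rewrite (win (k + L)%N) in hm1; last by rewrite kT (leq_trans tk (leq_addr _ _)).
  rewrite (win k) in hm2; last by rewrite tk (leq_trans (leq_addr _ _) kT).
  rewrite -/g in hm1 hm2.
  have m12 : (m1 < m2)%N by move: hlt; rewrite hm1 hm2 ltr_pM2r // ltr_nat.
  have : (m1.+1)%:R * g <= m2%:R * g by rewrite ler_wpM2r ?ler_nat // ltW.
  rewrite -addn1 !natrD; move: IH'; rewrite -/k; lra.
have h1 := Hind (N * (N - 1))%N (leqnn _).
rewrite -eT NN in h1.
have h2 := Hlow (Ttilde N) (introT andP (conj T1 (leqnn _))).
have e2 : 2 * N%:R * (N%:R - 1) * g = 2 * (N%:R * (N%:R - 1) * g) by ring.
rewrite e2 in Mtau.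
exfalso; exact: (fin_arith _ _ _ _ h1 h2 Mtau).
Qed.
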